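(* Let $s\geq k\geq 2$ be integers and let $T=T(s,k)$, of order $n=s+k+1$. Then $\mu_2(T)=\frac{3-\sqrt{5}}{2}$ and $\mu_{n-1}(T)=\frac{3+\sqrt{5}}{2}$.
   Context: For a graph $G$ on $n$ vertices, the Laplacian matrix is $L(G)=D(G)-A(G)$, with $D(G)$ the diagonal degree matrix and $A(G)$ the adjacency matrix; its eigenvalues are denoted $0=\mu_1(G)\leq\mu_2(G)\leq\cdots\leq\mu_n(G)$. For integers $1\leq k\leq s$, the spider $T(s,k)$ is the tree obtained from the star $K_{1,s}$ by extending $k$ of its $s$ rays by one extra edge each; it has $s+k+1$ vertices. *)

(* Defs.v *)
From HB Require Import structures.
From mathcomp Require Import all_boot all_order all_algebra.
From mathcomp Require Import reals.
Set Implicit Arguments. Unset Strict Implicit. Unset Printing Implicit Defensive.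
Import Order.TTheory GRing.Theory Num.Theory.
Local Open Scope ring_scope.

(* Spider T(s,k) on vertex set {0,...,s+k}: vertex 0 is the center,
   vertices 1..s are the ends of the s rays of the star K_{1,s},
   and for 1 <= j <= k the vertex s+j is attached to vertex j
   (extending the j-th ray by one extra edge). *)
Definition spider_adj (s k : nat) (i j : nat) : bool :=
  [|| (i == 0%N) && (0 < j <= s)%N,
      (j == 0%N) && (0 < i <= s)%N,
      (0 < i <= k)%N && (j == i + s)%N
    | (0 < j <= k)%N && (i == j + s)%N].

Definition spider (s k : nat) : rel 'I_(s + k + 1) :=
  fun i j => spider_adj s k i j.

Definition deg (n : nat) (e : rel 'I_n) (i : 'I_n) : nat := #|[set j | e i j]|.

Definition laplacian (R : nzRingType) (n : nat) (e : rel 'I_n) : 'M[R]_n :=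
  \matrix_(i, j) (if i == j then (deg e i)%:R else - (e i j)%:R).

(* l is the list of eigenvalues (with multiplicity) of A, in nondecreasing
   order: mu_1 = l`_0 <= mu_2 = l`_1 <= ... <= mu_n = l`_(n-1). *)
Definition is_sorted_spectrum (R : realType) (n : nat) (A : 'M[R]_n)
  (l : seq R) : Prop :=
  sorted <=%R l /\ char_poly A = \prod_(x <- l) ('X - x%:P).

(* Main.v *)
Require Import Defs.
From HB Require Import structures.
From mathcomp Require Import all_boot all_order all_algebra.
From mathcomp Require Import reals.
From mathcomp Require Import ring lra zify.
Import Order.TTheory GRing.Theory Num.Theory.
Local Open Scope ring_scope.

Lemma sum_nat_zero {R : realType} m p (F : nat -> R) :
  (forall i, (m <= i < p)%N -> F i = 0) -> \sum_(m <= i < p) F i = 0.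
Proof. by move=> H; rewrite big_nat_cond big1 // => i /andP[hi _]; apply: H. Qed.

Lemma sum_ind_itv {R : realType} n a b (v : nat -> R) : (b < n)%N -> (a <= b)%N ->
  \sum_(l < n) (if (a < l <= b)%N then v l else 0) = \sum_(a.+1 <= l < b.+1) v l.
Proof.
move=> bn ab.
rewrite -(big_mkord xpredT (fun l => if (a < l <= b)%N then v l else 0)).
rewrite (big_cat_nat (n := a.+1)) /=; [|lia|lia].
rewrite (big_cat_nat (n := b.+1) (m := a.+1)) /=; [|lia|lia].
rewrite sum_nat_zero; last by move=> l hl; case: ifP => // H; exfalso; lia.
rewrite [X in _ + (_ + X)]sum_nat_zero; last by move=> l hl; case: ifP => // H; exfalso; lia.
rewrite add0r addr0; apply: eq_big_nat => l hl.
by rewrite ifT //; lia.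
Qed.

Lemma sum_ind_pt {R : realType} n c (v : nat -> R) : (c < n)%N ->
  \sum_(l < n) (if (l == c :> nat) then v l else 0) = v c.
Proof.
move=> cn; rewrite -big_mkcond /=.
by rewrite (big_ord1_eq _ v c n) cn.
Qed.

Arguments sum_ind_itv {R n a b v}.
Arguments sum_ind_pt {R n c v}.

Definition nbsum (R : realType) s k (i : nat) (v : nat -> R) : R :=
  if (i == 0)%N then \sum_(1 <= l < s.+1) v l
  else if (i <= k)%N then v 0%N + v (i + s)%N
  else if (i <= s)%N then v 0%N
  else v (i - s)%N.
Arguments nbsum {R}.

Lemma nb_sum (R : realType) s k (hk : (1 <= k)%N) (hks : (k <= s)%N)
  (i : 'I_(s + k + 1)) (v : nat -> R) :
  \sum_(l < s + k + 1) (spider_adj s k i l)%:R * v l = nbsum s k i v.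
Proof.
rewrite /nbsum; have hi := ltn_ord i.
case: eqP => [i0|i0].
  rewrite -(sum_ind_itv (v := v) (n := s + k + 1) (a := 0%N) (b := s)); [|lia|lia].
  apply: eq_bigr => l _; rewrite i0.
  have -> : spider_adj s k 0 l = (0 < l <= s)%N by rewrite /spider_adj; lia.
  by case: ifP; rewrite ?mul1r ?mul0r.
case: ifP => ik.
  rewrite -(sum_ind_pt (v := v) (n := s + k + 1) (c := 0%N)); last by lia.
  rewrite -(sum_ind_pt (v := v) (n := s + k + 1) (c := (i + s)%N)); last by lia.
  rewrite -big_split /=; apply: eq_bigr => l _.
  have -> : spider_adj s k i l = (l == 0 :> nat) || (l == (i + s)%N :> nat) by rewrite /spider_adj; lia.
  case: (boolP (l == 0 :> nat)) => h1; case: (boolP (l == (i + s)%N :> nat)) => h2 /=;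
    rewrite ?mul1r ?mul0r ?addr0 ?add0r //; exfalso; lia.
case: ifP => iss.
  rewrite -(sum_ind_pt (v := v) (n := s + k + 1) (c := 0%N)); last by lia.
  apply: eq_bigr => l _.
  have -> : spider_adj s k i l = (l == 0 :> nat) by rewrite /spider_adj; lia.
  by case: ifP; rewrite ?mul1r ?mul0r.
rewrite -(sum_ind_pt (v := v) (n := s + k + 1) (c := (i - s)%N)); last by lia.
apply: eq_bigr => l _.
have -> : spider_adj s k i l = (l == (i - s)%N :> nat) by rewrite /spider_adj; lia.
by case: ifP; rewrite ?mul1r ?mul0r.
Qed.

Lemma deg_nb (R : realType) s k (hk : (1 <= k)%N) (hks : (k <= s)%N)
  (i : 'I_(s + k + 1)) :
  (deg (@spider s k) i)%:R = nbsum s k i (fun _ => 1 : R).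
Proof.
rewrite -nb_sum // /deg -sum1_card natr_sum big_mkcond /=.
apply: eq_bigr => l _; rewrite inE /spider.
by case: (spider_adj s k i l); rewrite /= ?mulr1.
Qed.

Definition Dg (R : realType) s k (i : nat) : R :=
  if (i == 0)%N then s%:R else if (i <= k)%N then 2 else 1.
Arguments Dg {R}.

Lemma deg_val (R : realType) s k (hk : (1 <= k)%N) (hks : (k <= s)%N)
  (i : 'I_(s + k + 1)) :
  (deg (@spider s k) i)%:R = Dg s k i :> R.
Proof.
rewrite deg_nb // /nbsum /Dg.
case: eqP => _; first by rewrite sumr_const_nat subn1 /=.
by case: ifP => _ //; case: ifP.
Qed.

Definition Mx (R : realType) s k (x : R) : 'M[R]_(s + k + 1) :=
  \matrix_(i, j) (if i == j then x - Dg s k i else (spider_adj s k i j)%:R).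
Arguments Mx {R}.

Lemma Mx_char (R : realType) s k (hk : (1 <= k)%N) (hks : (k <= s)%N) (x : R) :
  map_mx (horner_eval x) (char_poly_mx (laplacian R (@spider s k))) = Mx s k x.
Proof.
apply/matrixP => i j; rewrite !mxE /laplacian /char_poly_mx.
rewrite /horner_eval /= hornerD hornerN hornerMn hornerC hornerX.
have [ij|ij] := eqVneq i j.
  by rewrite mulr1n deg_val.
by rewrite mulr0n sub0r opprK /spider.
Qed.

Definition qq (R : realType) (x : R) := x ^+ 2 - 3 * x + 1.
Arguments qq {R}.

Definition pv (R : realType) s k (x : R) (j l : nat) : R :=
  if (j == 0)%N then
    (if (l == 0)%N then 1 else if (l <= k)%N then - (x - 1) / qq x
     else if (l <= s)%N then - (x - 1)^-1 else (qq x)^-1)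
  else if (j <= k)%N then
    (if (l == j)%N then 1 else if (l == j + s)%N then - (x - 1)^-1 else 0)
  else (if (l == j)%N then 1 else 0).
Arguments pv {R}.

Definition Pm (R : realType) s k (x : R) : 'M[R]_(s + k + 1) :=
  \matrix_(i, j) pv s k x j i.
Arguments Pm {R}.

Lemma MP_entry (R : realType) s k (hk : (1 <= k)%N) (hks : (k <= s)%N) (x : R)
  (i j : 'I_(s + k + 1)) :
  (Mx s k x *m Pm s k x) i j = (x - Dg s k i) * pv s k x j i + nbsum s k i (pv s k x j).
Proof.
rewrite mxE -nb_sum // -(sum_ind_pt (n := s + k + 1) (c := i) (v := fun l => (x - Dg s k i) * pv s k x j l)) //.
rewrite -big_split /=; apply: eq_bigr => l _; rewrite !mxE.
have [il|il] := eqVneq i l.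
  rewrite il eqxx /=.
  have -> : spider_adj s k l l = false by rewrite /spider_adj; lia.
  by rewrite mul0r addr0.
have -> : (val l == val i) = false by apply/eqP => /val_inj H; rewrite H in il; rewrite eqxx in il.
by rewrite add0r.
Qed.

Lemma MP_low (R : realType) s k (hk : (1 <= k)%N) (hks : (k <= s)%N) (x : R)
  (hx : x - 1 != 0) (hq : x ^+ 2 - 3 * x + 1 != 0) (i j : nat) :
  (j < i)%N -> (i < s + k + 1)%N -> (x - Dg s k i) * pv s k x j i + nbsum s k i (pv s k x j) = 0.
Proof.
move=> ji iN; rewrite /nbsum /Dg /pv /qq.
have -> : (i == 0)%N = false by lia.
repeat (case: ifP => ? /=); try (exfalso; lia); rewrite ?mul0r ?mulr0 ?addr0 ?add0r //.
all: try (field; rewrite ?hq ?hx //).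
Qed.


Definition dval (R : realType) s k (x : R) (i : nat) : R :=
  if (i == 0)%N then x - s%:R + k%:R * (- (x - 1) / qq x) + (s - k)%N%:R * (- (x - 1)^-1)
  else if (i <= k)%N then x - 2 - (x - 1)^-1 else x - 1.
Arguments dval {R}.

Lemma MP_diag (R : realType) s k (hk : (1 <= k)%N) (hks : (k <= s)%N) (x : R)
  (i : nat) : (i < s + k + 1)%N ->
  (x - Dg s k i) * pv s k x i i + nbsum s k i (pv s k x i) = dval s k x i.
Proof.
move=> iN; rewrite /nbsum /Dg /dval.
case: (boolP (i == 0)%N) => [/eqP -> | i0] /=.
  rewrite (big_cat_nat (n := k.+1)) /=; [|lia|lia].
  rewrite (@eq_big_nat _ _ _ 1 k.+1 _ (fun _ => - (x - 1) / qq x)); last first.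
    move=> l hl; rewrite /pv /=; have -> : (l == 0)%N = false by lia.
    by have -> : (l <= k)%N = true by lia.
  rewrite (@eq_big_nat _ _ _ k.+1 s.+1 _ (fun _ => - (x - 1)^-1)); last first.
    move=> l hl; rewrite /pv /=; have -> : (l == 0)%N = false by lia.
    have -> : (l <= k)%N = false by lia.
    by have -> : (l <= s)%N = true by lia.
  rewrite !sumr_const_nat /pv /= mulr1 !mulr_natl.
  have -> : (k.+1 - 1)%N = k by lia.
  have -> : (s.+1 - k.+1)%N = (s - k)%N by lia.
  by rewrite addrA.
rewrite /pv (negbTE i0).
case: ifP => ik /=.
  rewrite eqxx.
  have -> : (0 == i)%N = false by lia.
  have -> : (i + s == i)%N = false by lia.
  have -> : (i + s == i + s)%N = true by lia.
  have -> : (0 == i + s)%N = false by lia.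
  by rewrite mulr1 add0r.
have -> : (i == i)%N = true by lia.
rewrite mulr1; case: ifP => iss.
  have -> : (0 == i)%N = false by lia.
  by rewrite addr0.
have -> : (i - s == i)%N = false by lia.
by rewrite addr0.
Qed.

Lemma det_Mx_prod (R : realType) s k (hk : (1 <= k)%N) (hks : (k <= s)%N) (x : R)
  (hx : x - 1 != 0) (hq : x ^+ 2 - 3 * x + 1 != 0) :
  \det (Mx s k x) = \prod_(i < s + k + 1) dval s k x i.
Proof.
have hP : \det (Pm s k x) = 1.
  rewrite det_trig; last first.
    apply/is_trig_mxP => i j ij; rewrite mxE /pv.
    repeat (case: ifP => ? /=); try (exfalso; lia); done.
  rewrite big1 // => i _; rewrite mxE /pv.
  repeat (case: ifP => ? /=); try (exfalso; lia); done.
transitivity (\det (Mx s k x *m Pm s k x)); first by rewrite det_mulmx hP mulr1.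
rewrite -det_tr det_trig; last first.
  apply/is_trig_mxP => i j ij; rewrite mxE MP_entry //.
  by apply: MP_low.
apply: eq_bigr => i _; rewrite mxE MP_entry //.
by apply: MP_diag.
Qed.

Lemma prod_dval (R : realType) s k (hk : (1 <= k)%N) (hks : (k <= s)%N) (x : R) :
  \prod_(i < s + k + 1) dval s k x i =
  dval s k x 0 * (x - 2 - (x - 1)^-1) ^+ k * (x - 1) ^+ s.
Proof.
rewrite -(big_mkord xpredT (fun i => dval s k x i)).
rewrite (big_cat_nat (n := 1)) /=; [|lia|lia].
rewrite (big_cat_nat (n := k.+1) (m := 1)) /=; [|lia|lia].
rewrite big_nat1 -mulrA.
rewrite (@eq_big_nat _ _ _ 1 k.+1 _ (fun _ => x - 2 - (x - 1)^-1)); last first.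
  move=> l hl; rewrite /dval; have -> : (l == 0)%N = false by lia.
  by have -> : (l <= k)%N = true by lia.
rewrite (@eq_big_nat _ _ _ k.+1 _ _ (fun _ => x - 1)); last first.
  move=> l hl; rewrite /dval; have -> : (l == 0)%N = false by lia.
  by have -> : (l <= k)%N = false by lia.
rewrite !prodr_const_nat.
have -> : (k.+1 - 1)%N = k by lia.
by have -> : (s + k + 1 - k.+1)%N = s by lia.
Qed.

Definition gval (R : realType) s k (x : R) : R :=
  x ^+ 3 - (s + 4)%N%:R * x ^+ 2 + (3 * s + 4)%N%:R * x - (s + k + 1)%N%:R.
Arguments gval {R}.

Lemma det_formula (R : realType) s k (hk : (1 <= k)%N) (hks : (k <= s)%N) (x : R)
  (hx : x - 1 != 0) (hq : x ^+ 2 - 3 * x + 1 != 0) :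
  \det (Mx s k x) * (x - 1) =
  x * (x - 1) ^+ (s - k) * (x ^+ 2 - 3 * x + 1) ^+ k.-1 * gval s k x.
Proof.
rewrite det_Mx_prod // prod_dval //.
have hm : (x - 2 - (x - 1)^-1) = (x ^+ 2 - 3 * x + 1) / (x - 1).
  by field.
rewrite hm /dval /= /qq /gval.
case: k hk hks hm => [|k'] // _ hks _.
have [m ->] : exists m, s = (k'.+1 + m)%N by exists (s - k'.+1)%N; lia.
have -> : (k'.+1 + m - k'.+1)%N = m by lia.
rewrite expr_div_n.
rewrite (exprS (x ^+ 2 - 3 * x + 1)) (exprS (x - 1) k') exprD (exprS (x - 1) k') /=.
rewrite !natrD !natrM.
set A := (x - 1) ^+ k'. set B := (x - 1) ^+ m. set C := (x ^+ 2 - 3 * x + 1) ^+ k'.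
have hA : A != 0 by rewrite expf_neq0.
field.
by rewrite hA hx hq.
Qed.

Lemma char_eval (R : realType) s k (hk : (1 <= k)%N) (hks : (k <= s)%N) (x : R) :
  (char_poly (laplacian R (@spider s k))).[x] = \det (Mx s k x).
Proof.
rewrite /char_poly -Mx_char //.
by rewrite (det_map_mx (horner_eval x)).
Qed.

Lemma poly_zero_ge3 (R : realType) (p : {poly R}) :
  (forall x : R, 3 <= x -> p.[x] = 0) -> p = 0.
Proof.
move=> H; apply/eqP; apply: contraT => p0.
have := @max_poly_roots _ p [seq 3 + i%:R | i <- iota 0 (size p)] p0.
rewrite size_map size_iota ltnn; apply.
  apply/allP => y /mapP [i _ ->]; apply/eqP/H.
  by rewrite lerDl ler0n.
rewrite map_inj_uniq ?iota_uniq // => i j /addrI /eqP.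
by rewrite eqr_nat => /eqP.
Qed.

Lemma xg_id (R : realType) s k (hks : (k <= s)%N) (x : R) :
  x * gval s k x = (x - s%:R) * (x - 1) * (x ^+ 2 - 3 * x + 1)
     - (s - k)%N%:R * (x ^+ 2 - 3 * x + 1) - k%:R * (x - 1) ^+ 2.
Proof.
have [m ->] : exists m, s = (k + m)%N by exists (s - k)%N; lia.
have -> : (k + m - k)%N = m by lia.
rewrite /gval !natrD; ring.
Qed.

Lemma g1 (R : realType) s k (hks : (k <= s)%N) : gval s k (1 : R) = (s - k)%N%:R.
Proof.
have [m ->] : exists m, s = (k + m)%N by exists (s - k)%N; lia.
have -> : (k + m - k)%N = m by lia.
rewrite /gval !natrD; ring.
Qed.

Definition hval (R : realType) s (r x : R) : R :=
  x ^+ 2 + (r - (s + 4)%N%:R) * x + (r ^+ 2 - (s + 4)%N%:R * r + (3 * s + 4)%N%:R).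
Arguments hval {R}.

Lemma gh_id (R : realType) s k (r x : R) :
  gval s k x = (x - r) * hval s r x + gval s k r.
Proof. rewrite /gval /hval; ring. Qed.

Lemma sq5_facts (R : realType) : let t := Num.sqrt (5 : R) in
  t ^+ 2 = 5 /\ 2 < t /\ t < 3.
Proof.
move=> t; have t2 : t ^+ 2 = 5 by rewrite sqr_sqrtr // ler0n.
have t0 : 0 <= t by apply: sqrtr_ge0.
split=> //; split; nra.
Qed.

Lemma roots_g (R : realType) s k (hk : (2 <= k)%N) (hks : (k <= s)%N) :
  let a := (3 - Num.sqrt 5) / 2 : R in let b := (3 + Num.sqrt 5) / 2 : R in
  exists r1 r2 r3 : R, [/\ a < r1 <= 1, a < r2 < b, b < r3 &
     forall x, gval s k x = (x - r1) * (x - r2) * (x - r3)].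
Proof.
move=> a b.
have [t2 [t_gt t_lt]] := sq5_facts R.
have qa : a ^+ 2 - 3 * a + 1 = 0 by rewrite /a; nra.
have qb : b ^+ 2 - 3 * b + 1 = 0 by rewrite /b; nra.
have a0 : 0 < a by rewrite /a; lra.
have a1 : a < 1 by rewrite /a; lra.
have b1 : 1 < b by rewrite /b; lra.
have kpos : (0 : R) < k%:R by rewrite ltr0n; lia.
have ga : gval s k a < 0.
  rewrite -(pmulr_rlt0 _ a0) xg_id // qa !mulr0.
  have : 0 < k%:R * (a - 1) ^+ 2 by apply: mulr_gt0 => //; rewrite expr2; nra.
  lra.
have gb : gval s k b < 0.
  rewrite -(pmulr_rlt0 _ (_ : 0 < b)); last by lra.
  rewrite xg_id // qb !mulr0.
  have : 0 < k%:R * (b - 1) ^+ 2 by apply: mulr_gt0 => //; rewrite expr2; nra.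
  lra.
pose gp : {poly R} := 'X^3 - ((s + 4)%N%:R)%:P * 'X^2 + ((3 * s + 4)%N%:R)%:P * 'X
   - ((s + k + 1)%N%:R)%:P.
have gpE : forall x, gp.[x] = gval s k x by move=> x; rewrite /gp /gval !hornerE.
have [r1 /andP [ar1 r11] ] : exists2 r1, a <= r1 <= 1 & root gp r1.
  apply: poly_ivt; first lra.
  by rewrite !gpE g1 // ltW //= ler0n.
rewrite /root gpE => /eqP gr1.
have ar1' : a < r1.
  rewrite lt_neqAle ar1 andbT; apply/eqP => ar; move: ga; rewrite ar gr1; lra.
have ha : 0 < hval s r1 a.
  rewrite -(nmulr_rlt0 _ (_ : a - r1 < 0)); last by rewrite subr_lt0.
  by move: ga; rewrite (gh_id _ s k r1 a) gr1 addr0.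
have hb : hval s r1 b < 0.
  rewrite -(pmulr_rlt0 _ (_ : 0 < b - r1)); last by rewrite subr_gt0; lra.
  by move: gb; rewrite (gh_id _ s k r1 b) gr1 addr0.
pose hp : {poly R} := - ('X^2 + (r1 - (s + 4)%N%:R)%:P * 'X + (r1 ^+ 2 - (s + 4)%N%:R * r1 + (3 * s + 4)%N%:R)%:P).
have hpE : forall x, hp.[x] = - hval s r1 x by move=> x; rewrite /hp /hval !hornerE.
have [r2 /andP [ar2 r2b] ] : exists2 r2, a <= r2 <= b & root hp r2.
  apply: poly_ivt; first lra.
  by rewrite !hpE; apply/andP; split; lra.
rewrite /root hpE oppr_eq0 => /eqP hr2.
have ar2' : a < r2.
  rewrite lt_neqAle ar2 andbT; apply/eqP => ar; subst r2; lra.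
have r2b' : r2 < b.
  rewrite lt_neqAle r2b andbT; apply/eqP => ar; subst r2; lra.
pose r3 := (s + 4)%N%:R - r1 - r2.
have hid : forall x, hval s r1 x = (x - r2) * (x - r3).
  move=> x; rewrite -[RHS]addr0 -hr2 /hval /r3; ring.
have br3 : b < r3.
  move: hb; rewrite hid; rewrite (pmulr_rlt0 _ (_ : 0 < b - r2)) ?subr_gt0 //; lra.
exists r1, r2, r3; split => //; first by rewrite ar1' r11.
  by rewrite ar2' r2b'.
by move=> x; rewrite (gh_id _ s k r1 x) gr1 addr0 hid mulrA.
Qed.
Lemma nth1_low (R : realType) (l : seq R) (a : R) : sorted <=%R l ->
  count (fun y : R => (y < a)%R) l = 1%N -> (2 <= count (fun y : R => (y <= a)%R) l)%N -> l`_1 = a.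
Proof.
case: l => [|y0 [|y1 rest]] //=; first by case: (y0 <= a).
move=> /andP [h01 hp] c1 c2.
have hall := order_path_min le_trans hp.
case: (ltgtP y1 a) => h //.
  have h0 : y0 < a by apply: le_lt_trans h01 h.
  by move: c1; rewrite h h0.
have hn : ~~ has (fun y : R => (y <= a)%R) rest.
  apply/hasPn => z hz; rewrite -ltNge; apply: lt_le_trans h _.
  exact: (allP hall z hz).
move: hn c2; rewrite has_count -leqNgt leqn0 => /eqP ->.
by rewrite (leNgt y1) h /=; case: (y0 <= a)%R.
Qed.

Lemma nth1_high (R : realType) (l : seq R) (a : R) : sorted (fun x y => y <= x) l ->
  count (fun y : R => (a < y)%R) l = 1%N -> (2 <= count (fun y : R => (a <= y)%R) l)%N -> l`_1 = a.
Proof.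
case: l => [|y0 [|y1 rest]] //=; first by case: (a <= y0).
move=> /andP [h01 hp] c1 c2.
have tr : transitive (fun x y : R => y <= x) by move=> ? ? ? h1 h2; apply: le_trans h2 h1.
have hall := order_path_min tr hp.
case: (ltgtP y1 a) => h //; last first.
  have h0 : a < y0 by apply: lt_le_trans h h01.
  by move: c1; rewrite h h0.
have hn : ~~ has (fun y : R => (a <= y)%R) rest.
  apply/hasPn => z hz; rewrite -ltNge; apply: le_lt_trans _ h.
  exact: (allP hall z hz).
move: hn c2; rewrite has_count -leqNgt leqn0 => /eqP ->.
by rewrite (leNgt a y1) h /=; case: (a <= y0)%R.
Qed.

Lemma nth_high (R : realType) (l : seq R) (a : R) : sorted <=%R l -> (1 < size l)%N ->
  count (fun y : R => (a < y)%R) l = 1%N -> (2 <= count (fun y : R => (a <= y)%R) l)%N ->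
  l`_(size l - 2) = a.
Proof.
move=> hs hsz c1 c2.
rewrite -(@nth_rev _ 0 1 l) //; apply: nth1_high; rewrite ?count_rev //.
by rewrite rev_sorted.
Qed.

Lemma prod_nseq (R : realType) (n : nat) (c : R) (F : R -> R) :
  \prod_(y <- nseq n c) F y = F c ^+ n.
Proof.
elim: n => [|n IH]; first by rewrite big_nil expr0.
by rewrite /= big_cons IH exprS.
Qed.

Theorem lemma3p3 (R : realType) (s k : nat) (hk : (2 <= k)%N) (hks : (k <= s)%N) :
  (exists l : seq R, is_sorted_spectrum (laplacian R (@spider s k)) l) /\
  (forall l : seq R, is_sorted_spectrum (laplacian R (@spider s k)) l ->
     l`_1 = (3 - Num.sqrt 5) / 2 /\
     l`_((s + k + 1) - 2) = (3 + Num.sqrt 5) / 2).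
Proof.
have hk1 : (1 <= k)%N by lia.
have [r1 [r2 [r3 [/andP [ar1 r11] /andP [ar2 r2b] br3 gE]]]] := @roots_g R s k hk hks.
set a := (3 - Num.sqrt 5) / 2 : R.
set b := (3 + Num.sqrt 5) / 2 : R.
have [t2 [t_gt t_lt]] := sq5_facts R.
have a0 : 0 < a by rewrite /a; lra.
have a1 : a < 1 by rewrite /a; lra.
have b1 : 1 < b by rewrite /b; lra.
have qab : forall x : R, x ^+ 2 - 3 * x + 1 = (x - a) * (x - b).
  move=> x; apply/eqP; rewrite -subr_eq0; apply/eqP.
  rewrite /a /b; nra.
pose L1 := [:: 0; r1; r2; r3] ++ nseq k.-1 a ++ nseq k.-1 b ++ nseq (s - k) 1.
pose L := laplacian R (@spider s k).
have key : char_poly L * ('X - 1%:P) = \prod_(y <- L1) ('X - y%:P).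
  apply/eqP; rewrite -subr_eq0; apply/eqP; apply: poly_zero_ge3 => x hx3.
  have hx : x - 1 != 0 by apply/eqP => h; lra.
  have hq : x ^+ 2 - 3 * x + 1 != 0 by apply/eqP => h; nra.
  rewrite hornerD hornerN hornerM char_eval // hornerXsubC det_formula //.
  rewrite horner_prod !big_cat /= !big_cons big_nil !prod_nseq !hornerXsubC.
  rewrite gE qab exprMn; ring.
have one_in : 1 \in L1.
  rewrite /L1 !mem_cat !mem_nseq.
  case: (posnP (s - k)) => hm; last first.
  by rewrite eqxx !orbT.
  have : gval s k (1 : R) = 0 by rewrite g1 // hm.
  rewrite gE => /eqP; rewrite !mulf_eq0 !subr_eq0 => /orP [/orP [/eqP <- | /eqP <-] | /eqP <-];
    by rewrite !inE eqxx ?orbT.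
have prem : \prod_(y <- L1) ('X - y%:P) = \prod_(y <- rem 1 L1) ('X - y%:P) * ('X - 1%:P).
  by rewrite (perm_big _ (perm_to_rem one_in)) big_cons mulrC.
have cp : char_poly L = \prod_(y <- rem 1 L1) ('X - y%:P).
  apply: (@mulIf _ ('X - 1%:P)); first by rewrite polyXsubC_eq0.
  by rewrite /= key prem.
split.
  exists (sort <=%R (rem 1 L1)); split; first by apply: sort_sorted; exact: le_total.
  rewrite cp; apply: perm_big.
  by rewrite perm_sym perm_sort perm_refl.
move=> l [hs hc].
have hperm : perm_eq (1 :: l) L1.
  by apply: prod_XsubC_eq; rewrite big_cons -hc mulrC; exact: key.
have /permP cnt := hperm.
have hsize : size l = (s + k + 1)%N.
  have := perm_size hperm; rewrite /L1 /= !size_cat !size_nseq /= => h.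
  clear -h hk hks; lia.
have F1 : (r1 < a) = false by apply/negbTE; rewrite -leNgt ltW.
have F2 : (r2 < a) = false by apply/negbTE; rewrite -leNgt ltW.
have F3 : (r3 < a) = false by apply/negbTE; rewrite -leNgt; lra.
have F4 : (b < a) = false by apply/negbTE; rewrite -leNgt; lra.
have F5 : (1 < a) = false by apply/negbTE; rewrite -leNgt; lra.
have G1 : (r1 <= a) = false by apply/negbTE; rewrite -ltNge.
have G2 : (r2 <= a) = false by apply/negbTE; rewrite -ltNge.
have G3 : (r3 <= a) = false by apply/negbTE; rewrite -ltNge; lra.
have G4 : (b <= a) = false by apply/negbTE; rewrite -ltNge; lra.
have G5 : (1 <= a) = false by apply/negbTE; rewrite -ltNge; lra.
have H1 : (b < r1) = false by apply/negbTE; rewrite -leNgt; lra.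
have H2 : (b < r2) = false by apply/negbTE; rewrite -leNgt ltW.
have H3 : (b < 0) = false by apply/negbTE; rewrite -leNgt; lra.
have H4 : (b < a) = false by apply/negbTE; rewrite -leNgt; lra.
have H5 : (b < 1) = false by apply/negbTE; rewrite -leNgt; lra.
have I1 : (b <= r1) = false by apply/negbTE; rewrite -ltNge; lra.
have I2 : (b <= r2) = false by apply/negbTE; rewrite -ltNge.
have I3 : (b <= 0) = false by apply/negbTE; rewrite -ltNge; lra.
have I4 : (b <= a) = false by apply/negbTE; rewrite -ltNge; lra.
have I5 : (b <= 1) = false by apply/negbTE; rewrite -ltNge; lra.
have J1 : (b <= r3) by apply: ltW.
have J2 : (0 <= a) by apply: ltW.
split.
  apply: nth1_low => //.
    have := cnt (fun y : R => (y < a)%R).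
    rewrite /L1 /= !count_cat !count_nseq /= F1 F2 F3 F4 F5 a0 ltxx /= => h.
  move: (count _ l) h => c h; clear -h hk hks; lia.
  have := cnt (fun y : R => (y <= a)%R).
  rewrite /L1 /= !count_cat !count_nseq /= G1 G2 G3 G4 G5 J2 lexx /= => h.
  move: (count _ l) h => c h; clear -h hk hks; lia.
rewrite -hsize; apply: nth_high => //; first by rewrite hsize; clear -hk; lia.
  have := cnt (fun y : R => (b < y)%R).
  rewrite /L1 /= !count_cat !count_nseq /= H1 H2 H3 H4 H5 br3 ltxx /= => h.
  move: (count _ l) h => c h; clear -h hk hks; lia.
have := cnt (fun y : R => (b <= y)%R).
rewrite /L1 /= !count_cat !count_nseq /= I1 I2 I3 I4 I5 J1 lexx /= => h.
  move: (count _ l) h => c h; clear -h hk hks; lia.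
Qed.
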